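(* Let $p$ be a prime number, and let $N,n\ge 1$ and $\nu\ge 0$ be integers with $n\not\equiv 0\pmod{p-1}$. If $$\mathrm{ord}_p(N-1)\ \ge\ \nu+1+\mathrm{ord}_p\Big(\prod_{k=0}^{n}(1+k)!\Big)+\mathrm{ord}_p(n),$$ then $$\frac{B_{N,n}}{n}\equiv\frac{B_n}{n}\pmod{p^{\nu+1}}.$$
   Context: For a positive integer $N$, the hypergeometric Bernoulli numbers $B_{N,n}$ are defined by $\frac{x^N/N!}{e^x-\sum_{n=0}^{N-1}x^n/n!}=\sum_{n\ge0} B_{N,n}\frac{x^n}{n!}$, and the classical Bernoulli numbers $B_n$ by $\frac{x}{e^x-1}=\sum_{n\ge0}B_n\frac{x^n}{n!}$. $\mathrm{ord}_p$ denotes the $p$-adic valuation on $\mathbb{Q}$ (with $\mathrm{ord}_p(0)=\infty$); for rationals $a,b$, $a\equiv b\pmod{p^s}$ means $\mathrm{ord}_p(a-b)\ge s$. *)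

(* Defs.v *)
From mathcomp Require Import all_boot all_order all_algebra.
Set Implicit Arguments. Unset Strict Implicit. Unset Printing Implicit Defensive.
Import Order.TTheory GRing.Theory Num.Theory.
Local Open Scope ring_scope.

(* Coefficients of the reciprocal of a formal power series A(x) = sum a_m x^m
   with a_0 <> 0: if 1/A(x) = sum c_n x^n then
   c_0 = 1/a_0 and c_n = -(1/a_0) * sum_{k<n} a_(n-k) c_k.
   recip_seq a n = [:: c_0; ...; c_n]. *)
Fixpoint recip_seq (a : nat -> rat) (n : nat) : seq rat :=
  match n with
  | 0%N => [:: (a 0%N)^-1]
  | n'.+1 =>
      let s := recip_seq a n' in
      rcons s (- (a 0%N)^-1 * \sum_(k < n'.+1) a (n'.+1 - k)%N * nth 0 s k)
  end.

Definition recip_coef (a : nat -> rat) (n : nat) : rat := nth 0 (recip_seq a n) n.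

(* Hypergeometric Bernoulli numbers:
   (x^N/N!) / (e^x - sum_{n<N} x^n/n!) = sum_n B_{N,n} x^n/n!.
   Since e^x - sum_{n<N} x^n/n! = x^N * sum_m x^m/(N+m)!, the left side is
   (1/N!) * 1/(sum_m x^m/(N+m)!). *)
Definition hbern (N n : nat) : rat :=
  n`!%:R * ((N`!%:R)^-1 * recip_coef (fun m => ((N + m)`!%:R)^-1) n).

(* Classical Bernoulli numbers: x/(e^x - 1) = 1/(sum_m x^m/(m+1)!)
   = sum_n B_n x^n/n!. *)
Definition bern (n : nat) : rat :=
  n`!%:R * recip_coef (fun m => ((m.+1)`!%:R)^-1) n.

(* p-adic valuation of a nonzero rational (value on 0 irrelevant, see below). *)
Definition ordq (p : nat) (r : rat) : int :=
  (logn p `|numq r|%N)%:Z - (logn p `|denq r|%N)%:Z.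

(* a = b (mod p^s) for rationals: ord_p(a - b) >= s, with ord_p(0) = +oo. *)
Definition congr_ppow (p s : nat) (a b : rat) : Prop :=
  a = b \/ (s%:Z <= ordq p (a - b)).

(* Main.v *)
Require Import Defs.
From mathcomp Require Import all_boot all_order all_algebra.
From mathcomp Require Import ring lra zify.
Import Order.TTheory GRing.Theory Num.Theory.
Local Open Scope ring_scope.

Definition pint_ (p : nat) (r : rat) :=
  exists (u : int) (v : nat), ~~ (p %| v)%N /\ r = u%:~R / v%:R.

Section P.
Variable p : nat.
Hypothesis pp : prime p.
Local Notation pint := (pint_ p).

Lemma ndvd_pos v : ~~ (p %| v)%N -> (0 < v)%N.
Proof. by case: v => //; rewrite dvdn0. Qed.

Lemma ndvd_neq0 v : ~~ (p %| v)%N -> (v%:R : rat) != 0.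
Proof. by move/ndvd_pos; rewrite pnatr_eq0 -lt0n. Qed.

Lemma pint_int (u : int) : pint u%:~R.
Proof.
exists u, 1%N; split; last by rewrite divr1.
by rewrite dvdn1; case: (p =P 1%N) pp => // ->.
Qed.

Lemma pint_nat (k : nat) : pint k%:R.
Proof. by have := pint_int k; rewrite pmulrn. Qed.

Lemma pint_divn (a v : nat) : ~~ (p %| v)%N -> pint (a%:R / v%:R).
Proof. by move=> h; exists a, v; rewrite pmulrn. Qed.

Lemma pintM x y : pint x -> pint y -> pint (x * y).
Proof.
move=> [u1 [v1 [h1 ->]]] [u2 [v2 [h2 ->]]].
exists (u1 * u2), (v1 * v2)%N; split.
  by rewrite Euclid_dvdM // negb_or h1 h2.
rewrite intrM natrM; field.
by rewrite !ndvd_neq0.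
Qed.

Lemma pintD x y : pint x -> pint y -> pint (x + y).
Proof.
move=> [u1 [v1 [h1 ->]]] [u2 [v2 [h2 ->]]].
exists (u1 * v2%:Z + u2 * v1%:Z), (v1 * v2)%N; split.
  by rewrite Euclid_dvdM // negb_or h1 h2.
rewrite intrD !intrM natrM -!pmulrn; field.
by rewrite !ndvd_neq0.
Qed.

Lemma pintN x : pint x -> pint (- x).
Proof.
move=> [u1 [v1 [h1 ->]]]; exists (- u1), v1; split => //.
by rewrite intrN mulNr.
Qed.

Lemma pintB x y : pint x -> pint y -> pint (x - y).
Proof. by move=> hx hy; apply: pintD => //; apply: pintN. Qed.

Lemma pint_sum k (F : 'I_k -> rat) : (forall i, pint (F i)) -> pint (\sum_(i < k) F i).
Proof.
move=> h; elim/big_ind: _ => //; first by have := pint_nat 0; rewrite mulr0n.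
by move=> ? ? ; apply: pintD.
Qed.

Lemma pint_dvd (a b : nat) : (b %| a)%N -> (0 < b)%N -> pint (a%:R / b%:R).
Proof.
move=> /dvdnP [c ->] b0; rewrite natrM mulfK; first exact: pint_nat.
by rewrite pnatr_eq0 -lt0n.
Qed.

Lemma ordq_rep (r : rat) (u : int) (v : nat) :
  u != 0 -> (0 < v)%N -> r = u%:~R / v%:R ->
  ordq p r = (logn p `|u|%N)%:Z - (logn p v)%:Z.
Proof.
move=> u0 v0 hr.
have e : numq r * v%:Z = u * denq r.
  apply: (@intr_inj rat).
  have : (numq r)%:~R / (denq r)%:~R = u%:~R / v%:R :> rat by rewrite divq_num_den.
  move=> /eqP.
  have dq : ((denq r)%:~R : rat) != 0 by rewrite intr_eq0 denq_neq0.
  have vq : (v%:R : rat) != 0 by rewrite pnatr_eq0 -lt0n.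
  rewrite eqr_div // => /eqP e; rewrite !intrM -pmulrn e; ring.
have n0 : numq r != 0.
  apply/negP => /eqP n0; move: e; rewrite n0 mul0r => /esym/eqP.
  by rewrite mulf_eq0 (negbTE u0) (negbTE (denq_neq0 r)).
have := congr1 (fun z : int => logn p `|z|%N) e => /=.
rewrite !abszM !lognM ?absz_gt0 ?denq_neq0 //.
rewrite /ordq /=.
move=> h; lia. by rewrite -lt0n.
Qed.

Lemma ordq_ge (s : nat) (w : rat) : pint w -> w != 0 ->
  (s%:Z <= ordq p (p%:R ^+ s * w))%R.
Proof.
move=> [u [v [hv ew]]] w0.
have u0 : u != 0 by apply: contraNneq w0 => u0; rewrite ew u0 mul0r.
have pz : (p%:Z ^+ s * u) != 0.
  rewrite mulf_eq0 negb_or u0 expf_eq0 andbT; apply/nandP; right; rewrite eqz_nat; apply/eqP => h; by move: pp; rewrite h.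
rewrite (@ordq_rep _ (p%:Z ^+ s * u) v pz (ndvd_pos _ hv)).
  rewrite abszM abszX lognM ?expn_gt0 ?absz_gt0 ?(prime_gt0 pp) //.
  rewrite (pfactorK _ pp).
  have -> : logn p v = 0%N by apply: logn_coprime; rewrite prime_coprime.
  lia.
  by rewrite eqz_nat -lt0n prime_gt0.
rewrite ew intrM mulrA; congr (_ * _ * _); by rewrite rmorphXn /= -pmulrn.
Qed.
End P.

Lemma size_recip a k : size (recip_seq a k) = k.+1.
Proof. by elim: k => //= k ih; rewrite size_rcons ih. Qed.

Lemma nth_recip a k j : (j <= k)%N -> nth 0 (recip_seq a k) j = recip_coef a j.
Proof.
elim: k => [|k ih]; first by rewrite leqn0 => /eqP ->.
rewrite leq_eqVlt => /orP [/eqP -> //|hj].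
by rewrite /= nth_rcons size_recip hj ih.
Qed.

Lemma recip_S a k : recip_coef a k.+1 =
  - (a 0%N)^-1 * \sum_(j < k.+1) a (k.+1 - j)%N * recip_coef a j.
Proof.
rewrite /recip_coef /= nth_rcons size_recip ltnn eqxx.
congr (_ * _); apply: eq_bigr => j _; congr (_ * _).
by rewrite nth_recip // -ltnS.
Qed.

Lemma recip_0 a : recip_coef a 0 = (a 0%N)^-1.
Proof. by []. Qed.

Lemma fact_dvd m k : (m <= k)%N -> (m`! %| k`!)%N.
Proof.
elim: k => [|k ih]; first by rewrite leqn0 => /eqP ->.
rewrite leq_eqVlt => /orP [/eqP -> //|hm].
by rewrite factS dvdn_mull // ih.
Qed.

Definition P (k : nat) : nat := \prod_(i < k.+1) (1 + i)`!.

Lemma P_S k : P k.+1 = (P k * (k.+2)`!)%N.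
Proof. by rewrite /P big_ord_recr. Qed.

Lemma P_gt0 k : (0 < P k)%N.
Proof. by rewrite /P; apply: prodn_gt0 => i; apply: fact_gt0. Qed.

Lemma fact_dvd_P m k : (m <= k)%N -> ((m.+1)`! %| P k)%N.
Proof.
elim: k => [|k ih]; first by rewrite leqn0 => /eqP ->; rewrite /P big_ord1.
rewrite P_S leq_eqVlt => /orP [/eqP -> |hm]; first by rewrite dvdn_mull.
by rewrite dvdn_mulr // ih.
Qed.

Lemma P_dvd j k : (j < k)%N -> (P j * (k.+1)`! %| P k)%N.
Proof.
elim: k => // k ih; rewrite ltnS leq_eqVlt => /orP [/eqP -> |hj].
  by rewrite P_S.
rewrite P_S; apply: dvdn_mul; last by [].
by apply: dvdn_trans (ih hj); apply: dvdn_mulr.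
Qed.

Lemma Ex (e m : nat) : exists K, ((e.+1 + m)`! = e.+1`! * ((m.+1)`! + e * K))%N.
Proof.
elim: m => [|m [K ih]]; first by exists 0%N; rewrite addn0 muln0 addn0 muln1.
exists ((m.+1)`! + (e.+1 + m.+1) * K)%N.
rewrite addnS factS ih [(m.+2)`!]factS.
set F := (m.+1)`!; set G := e.+1`!.
nia.
Qed.

Lemma Glem (p x K e : nat) : prime p -> (0 < x)%N -> (p ^ (logn p x).+1 %| e)%N ->
  pint_ p (x%:R / (x + e * K)%:R).
Proof.
move=> pp x0 /dvdnP [t ->].
have [r cr ex] := pfactor_coprime pp x0.
set g := logn p x in ex *.
have -> : (x + t * p ^ g.+1 * K = (r + t * p * K) * p ^ g)%N.
  by rewrite {1}ex expnS; ring.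
rewrite {1}ex !natrM.
have pg : ((p ^ g)%:R : rat) != 0 by rewrite pnatr_eq0 expn_eq0 negb_and -lt0n prime_gt0.
have nd : ~~ (p %| r + t * p * K)%N.
  rewrite -mulnA dvdn_addl; first by rewrite -(prime_coprime _ pp).
  by rewrite mulnCA dvdn_mulr.
rewrite -mulf_div divff // mulr1.
exact: pint_divn.
Qed.

Lemma ab_fact a b : (0 < a < b)%N -> (a * b %| b`!)%N.
Proof.
move=> /andP [a0 ab]; case: b ab => // b ab; rewrite factS mulnC dvdn_pmul2l //.
by apply: dvdn_fact; rewrite a0 -ltnS.
Qed.

Lemma composite_dvd q : (1 < q)%N -> ~~ prime q -> q != 4%N -> (q %| q.-1`!)%N.
Proof.
move=> q1 nq q4.
have pd := pdiv_prime q1; have dq := pdiv_dvd q.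
set d := pdiv q in pd dq.
have [c ec] := dvdnP dq.
have d1 : (1 < d)%N by apply: prime_gt1.
have c1 : (1 < c)%N.
  case: c ec => [|[|c]] ec //; first by move: q1; rewrite ec.
  by move: nq; rewrite ec mul1n pd.
have hd : (d < q)%N by rewrite ec; nia.
have hc : (c < q)%N by rewrite ec; nia.
case: (ltngtP c d) => hcd.
- rewrite ec; apply: (@dvdn_trans d`!); [apply: ab_fact | apply: fact_dvd]; lia.
- rewrite ec mulnC; apply: (@dvdn_trans c`!); [apply: ab_fact | apply: fact_dvd]; lia.
- have d3 : (2 < d)%N.
    rewrite ltnNge; apply/negP => h; have d2 : d = 2%N by lia.
    by move: q4; rewrite ec hcd d2.
  rewrite ec hcd; apply: dvdn_trans (dvdn_mulr 2 (dvdnn (d * d))) _.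
  rewrite -mulnA (mulnC d 2); apply: (@dvdn_trans (2 * d)`!); [apply: ab_fact | apply: fact_dvd]; nia.
Qed.

Lemma Dlem p n : prime p -> ~~ (p.-1 %| n)%N -> (1 <= n)%N ->
  pint_ p (n`!%:R / (n.+1)%:R).
Proof.
move=> pp hn n1.
have p2 : p != 2%N by apply: contraNneq hn => ->; rewrite dvd1n.
case: (boolP (prime n.+1)) => pn.
  apply: pint_divn; by rewrite dvdn_prime2 //; apply: contraNneq hn => ->.
case: (n.+1 =P 4%N) => [e4|n4].
  apply: pint_divn; rewrite e4; apply/negP => h.
  have : (p %| 2 * 2)%N by [].
  by rewrite Euclid_dvdM // orbb dvdn_prime2 // (negbTE p2).
apply: pint_dvd => //; apply: (composite_dvd (n.+1)) => //; exact/eqP.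
Qed.

Definition al (e m : nat) : rat := (e.+1)`!%:R / (e.+1 + m)`!%:R.
Definition be (m : nat) : rat := ((m.+1)`!%:R)^-1.
Definition dd (e k : nat) : rat :=
  ((e.+1)`!%:R)^-1 * recip_coef (fun m => ((e.+1 + m)`!%:R)^-1) k.
Definition ee (k : nat) : rat := recip_coef (fun m => ((m.+1)`!%:R)^-1) k.

Lemma fact_neq0 k : (k`!%:R : rat) != 0.
Proof. by rewrite pnatr_eq0 -lt0n fact_gt0. Qed.

Lemma P_neq0 k : ((P k)%:R : rat) != 0.
Proof. by rewrite pnatr_eq0 -lt0n P_gt0. Qed.

Lemma dd0 e : dd e 0 = 1.
Proof. by rewrite /dd recip_0 addn0 invrK mulVf ?fact_neq0. Qed.

Lemma ee0 : ee 0 = 1.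
Proof. by rewrite /ee recip_0 /= invr1. Qed.

Lemma ddS e k : dd e k.+1 = - \sum_(j < k.+1) al e (k.+1 - j) * dd e j.
Proof.
rewrite /dd recip_S addn0 invrK mulNr mulrN mulrA mulVf ?fact_neq0 // mul1r.
congr (- _); apply: eq_bigr => j _; rewrite /al /dd.
have := fact_neq0 (e.+1 + (k.+1 - j)); have := fact_neq0 e.+1.
move=> h1 h2; field; by rewrite h1 h2.
Qed.

Lemma eeS k : ee k.+1 = - \sum_(j < k.+1) be (k.+1 - j) * ee j.
Proof. by rewrite /ee recip_S /= invr1 mulN1r. Qed.

Lemma alK e m : exists K, al e m = (((m.+1)`! + e * K)%N%:R)^-1.
Proof.
have [K hK] := Ex e m; exists K; rewrite /al hK natrM.
have h1 := fact_neq0 e.+1.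
have h2 : (((m.+1)`! + e * K)%N%:R : rat) != 0.
  by rewrite pnatr_eq0 addn_eq0 negb_and -lt0n fact_gt0.
field; by rewrite -natrM -natrD h1 h2.
Qed.

Lemma al_S e m : al e m.+1 = al e m / (e.+1 + m.+1)%:R.
Proof.
have hf : ((e.+1 + m.+1)`! = (e.+1 + m.+1) * (e.+1 + m)`!)%N by rewrite addnS factS.
rewrite /al hf natrM.
have h2 := fact_neq0 (e.+1 + m); have h : ((e.+1 + m.+1)%:R : rat) != 0 by rewrite pnatr_eq0 addnS.
field; by rewrite !nat1r -natrD h2 pnatr_eq0 addnS.
Qed.

Lemma be_S m : be m.+1 = be m / (m.+2)%:R.
Proof. by rewrite /be factS natrM invfM mulrC. Qed.

Lemma expand e k (R : nat) :
  R%:R * (dd e k.+1 - ee k.+1) / e%:R =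
  - \sum_(j < k.+1) (R%:R * ((al e (k.+1 - j) - be (k.+1 - j)) * dd e j) / e%:R
                    + R%:R * (be (k.+1 - j) * (dd e j - ee j)) / e%:R).
Proof.
rewrite ddS eeS -!sumrN -big_split mulr_sumr mulr_suml; apply: eq_bigr => j _ /=; ring.
Qed.

Lemma coefA j k : (j < k)%N -> (((k - j).+1)`! * P j %| P k)%N.
Proof.
move=> jk; apply: (@dvdn_trans (P j * (k.+1)`!)); last exact: P_dvd jk.
rewrite mulnC dvdn_pmul2l ?P_gt0 //.
apply: fact_dvd; lia.
Qed.

Section M.
Variables (p e n nu : nat).
Hypotheses (pp : prime p) (e0 : (0 < e)%N) (n1 : (1 <= n)%N)
  (hn : ~~ (p.-1 %| n)%N)
  (hM : (nu + 1 + logn p (P n) + logn p n <= logn p e)%N).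
Local Notation pint := (pint_ p).

Lemma e_neq0 : (e%:R : rat) != 0.
Proof. by rewrite pnatr_eq0 -lt0n. Qed.

Lemma hdiv x : (x %| P n)%N -> (p ^ (logn p x).+1 %| e)%N.
Proof.
move=> hx; rewrite pfactor_dvdn //.
have := dvdn_leq_log p (P_gt0 n) hx; lia.
Qed.

Lemma F1 m : (m <= n)%N -> pint ((m.+1)`!%:R * al e m).
Proof.
move=> mn; have [K ->] := alK e m.
apply: Glem => //; first exact: fact_gt0.
by apply: hdiv; apply: fact_dvd_P.
Qed.

Lemma F2 m : (m <= n)%N -> pint ((m.+1)`!%:R ^+ 2 * (al e m - be m) / e%:R).
Proof.
move=> mn; have [K hK] := alK e m.
have h : (m.+1)`!%:R ^+ 2 * (al e m - be m) / e%:R =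
   - K%:R * ((m.+1)`!%:R / ((m.+1)`! + e * K)%N%:R).
  rewrite hK /be.
  have h1 := fact_neq0 (m.+1).
  have h2 : (((m.+1)`! + e * K)%N%:R : rat) != 0.
    by rewrite pnatr_eq0 addn_eq0 negb_and -lt0n fact_gt0.
  have h3 := e_neq0.
  rewrite natrD natrM in h2 *.
  field; by rewrite h1 h2 h3.
rewrite h; apply: (pintM _ pp); first by apply: pintN; exact: (pint_nat _ pp).
apply: Glem => //; first exact: fact_gt0.
by apply: hdiv; apply: fact_dvd_P.
Qed.

Lemma term j k (R : nat) : (j < k)%N -> (k <= n)%N ->
  pint ((P j)%:R * dd e j) ->
  pint ((P j * (j.+1)`!)%:R * (dd e j - ee j) / e%:R) ->
  (((k - j).+1`! * P j * (k - j).+1`!) %| R)%N ->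
  (((k - j).+1`! * P j * (j.+1)`!) %| R)%N ->
  pint (R%:R * ((al e (k - j) - be (k - j)) * dd e j) / e%:R
                    + R%:R * (be (k - j) * (dd e j - ee j)) / e%:R).
Proof.
move=> jk kn I2 I3 d1 d2.
set m := (k - j)%N in d1 d2 *.
have mn : (m <= n)%N by rewrite /m; lia.
have hf := fact_neq0 m.+1; have hP := P_neq0 j; have he := e_neq0.
have hj := fact_neq0 j.+1.
apply: (pintD _ pp).
  have -> : R%:R * ((al e m - be m) * dd e j) / e%:R =
     (R%:R / ((m.+1)`! * P j * (m.+1)`!)%N%:R) *
     ((m.+1)`!%:R ^+ 2 * (al e m - be m) / e%:R) * ((P j)%:R * dd e j).
    move: (al e m) (be m) (dd e j) hf hP he.
    move: ((m.+1)`!) (P j) (e%:R : rat) => F Pj E a b dj hf hP he.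
    rewrite !natrM; field; by rewrite hf hP he.
  apply: (pintM _ pp); last by [].
  apply: (pintM _ pp); last by apply: F2.
  by apply: pint_dvd => //; rewrite !muln_gt0 fact_gt0 P_gt0.
have -> : R%:R * (be m * (dd e j - ee j)) / e%:R =
   (R%:R / ((m.+1)`! * P j * (j.+1)`!)%N%:R) *
   ((P j * (j.+1)`!)%:R * (dd e j - ee j) / e%:R).
  rewrite /be.
  move: (al e m) (dd e j) (ee j) hf hP he hj.
  move: ((m.+1)`!) (P j) (e%:R : rat) ((j.+1)`!) => F Pj E J a dj ej hf hP he hj.
  rewrite !natrM.
  field; by rewrite hf hP he hj.
apply: (pintM _ pp); last by [].
by apply: pint_dvd => //; rewrite !muln_gt0 !fact_gt0 P_gt0.
Qed.

Lemma inv k : (k <= n)%N -> pint ((P k)%:R * dd e k) /\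
  pint ((P k * (k.+1)`!)%:R * (dd e k - ee k) / e%:R).
Proof.
elim/ltn_ind: k => k IH kn.
case: k IH kn => [|k] IH kn.
  rewrite dd0 ee0 subrr mulr0 mul0r mulr1; split; first exact: (pint_nat _ pp).
  exact: (pint_nat _ pp 0).
split.
  rewrite ddS mulrN mulr_sumr; apply: pintN; apply: (pint_sum _ pp) => j.
  have jk : (j < k.+1)%N := ltn_ord j.
  have [I2 _] := IH j jk (ltnW (leq_trans jk kn)).
  have cA := @coefA j k.+1 jk.
  set m := (k.+1 - j)%N in cA *.
  have mn : (m <= n)%N by rewrite /m; lia.
  have hF1 := F1 _ mn.
  have hf := fact_neq0 m.+1; have hP := P_neq0 j; have hP2 := P_neq0 k.+1.
  have -> : (P k.+1)%:R * (al e m * dd e j) =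
      ((P k.+1)%:R / ((m.+1)`! * P j)%N%:R) * ((m.+1)`!%:R * al e m) * ((P j)%:R * dd e j).
    move: (al e m) (dd e j) hf hP hP2.
    move: ((m.+1)`!) (P j) (P k.+1) => F Pj Pk a dj hf hP hP2.
    rewrite !natrM; field; by rewrite hf hP.
  apply: (pintM _ pp) => //; apply: (pintM _ pp) => //.
  by apply: pint_dvd => //; rewrite muln_gt0 fact_gt0 P_gt0.
rewrite expand; apply: pintN; apply: (pint_sum _ pp) => j.
have jk : (j < k.+1)%N := ltn_ord j.
have [I2 I3] := IH j jk (ltnW (leq_trans jk kn)).
apply: (@term j k.+1) => //.
  apply: dvdn_mul; first exact: coefA.
  apply: fact_dvd; lia.
apply: dvdn_mul; first exact: coefA.
apply: fact_dvd; lia.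
Qed.

Lemma fin : pint ((P n * n`!)%:R * (dd e n - ee n) / e%:R).
Proof.
have [n' en] : exists n', n = n'.+1 by exists n.-1; lia.
have nn : (n' <= n)%N by lia.
rewrite en expand big_ord_recl /=; apply: pintN; apply: (pintD _ pp); last first.
  apply: (pint_sum _ pp) => i.
  have ik : (i < n')%N := ltn_ord i.
  have [I2 I3] := inv i.+1 (ltac:(lia)).
  apply: (@term i.+1 n'.+1) => //; first by lia.
    apply: dvdn_mul; first by apply: coefA; lia.
    apply: fact_dvd; lia.
  apply: dvdn_mul; first by apply: coefA; lia.
  apply: fact_dvd; lia.
rewrite subn0 dd0 ee0 subrr !mulr0 mul0r addr0 mulr1 al_S be_S.
have hA := F1 _ nn.
have hF := F2 _ nn.
have hB : pint ((P n'.+1)%:R / ((n'.+2)`! * (n'.+1)`!)%N%:R).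
  apply: pint_dvd => //; last by rewrite muln_gt0 !fact_gt0.
  by rewrite P_S mulnC dvdn_pmul2r ?fact_gt0 // fact_dvd_P.
have hH : pint ((P n'.+1)%:R / ((n'.+2)`!)%:R).
  by apply: pint_dvd => //; [exact: fact_dvd_P | exact: fact_gt0].
have hD : pint ((n'.+1)`!%:R / (n'.+2)%:R).
  by apply: Dlem => //; rewrite -en.
have hE : pint ((n'.+2)%:R / (n'.+2 + e * 1)%N%:R).
  apply: Glem => //; apply: hdiv; rewrite en.
  apply: (@dvdn_trans (n'.+2)`!); last exact: fact_dvd_P.
  by rewrite factS dvdn_mulr.
have -> : (P n'.+1 * (n'.+1)`!)%:R * (al e n' / (e.+1 + n'.+1)%:R - be n' / (n'.+2)%:R) / e%:R
  = - (((n'.+1)`!%:R * al e n') * ((P n'.+1)%:R / ((n'.+2)`! * (n'.+1)`!)%N%:R)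
        * (n'.+1)`!%:R * ((n'.+1)`!%:R / (n'.+2)%:R) * ((n'.+2)%:R / (n'.+2 + e * 1)%N%:R))
    + ((n'.+1)`!%:R ^+ 2 * (al e n' - be n') / e%:R) * ((P n'.+1)%:R / ((n'.+2)`!)%:R).
  have ee1 : (e.+1 + n'.+1 = n'.+2 + e * 1)%N by lia.
  rewrite ee1 [(n'.+2)`!]factS.
  have hf := fact_neq0 n'.+1; have hP := P_neq0 n'.+1; have he := e_neq0.
  have hx : ((n'.+2)%:R : rat) != 0 by rewrite pnatr_eq0.
  have hxe : ((n'.+2 + e * 1)%N%:R : rat) != 0 by rewrite pnatr_eq0 addn_eq0.
  move: (al e n') (be n') hf hP he hx hxe.
  move: ((n'.+1)`!) (P n'.+1) (n'.+2) => f Pn x a b hf hP he hx hxe.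
  rewrite muln1 in hxe *.
  rewrite !natrM !natrD in hxe *.
  field; by rewrite hf he hx hxe.
apply: (pintD _ pp); last by apply: (pintM _ pp).
apply: pintN; apply: (pintM _ pp) => //; apply: (pintM _ pp) => //.
apply: (pintM _ pp); last exact: (pint_nat _ pp).
exact: (pintM _ pp).
Qed.

End M.

Lemma Zlem p e n nu : prime p -> (0 < e)%N -> (1 <= n)%N ->
  (nu + 1 + logn p (P n) + logn p n <= logn p e)%N ->
  pint_ p (e%:R / (P n * n * p ^ nu.+1)%N%:R).
Proof.
move=> pp e0 n1 hM.
have [r cr er] := pfactor_coprime pp (P_gt0 n).
have [s cs es] := pfactor_coprime pp n1.
have : (p ^ (nu + 1 + logn p (P n) + logn p n) %| e)%N by rewrite pfactor_dvdn.
move=> /dvdnP [t et].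
have r0 : (0 < r)%N by move: cr; case: r {er} => //; rewrite /coprime gcdn0 => /eqP h; move: pp; rewrite h.
have s0 : (0 < s)%N by move: cs; case: s {es} => //; rewrite /coprime gcdn0 => /eqP h; move: pp; rewrite h.
have key : (e * (r * s) = t * (P n * n * p ^ nu.+1))%N.
  have gen : forall L l Pn nn e t r s, e = (t * p ^ (nu + 1 + L + l))%N ->
      Pn = (r * p ^ L)%N -> nn = (s * p ^ l)%N -> (e * (r * s) = t * (Pn * nn * p ^ nu.+1))%N.
    move=> L l Pn nn ? ? ? ? -> -> ->; rewrite !expnD !expnS expn0; ring.
  exact: (gen _ _ _ _ _ _ _ _ et er es).
have -> : (e%:R / (P n * n * p ^ nu.+1)%N%:R : rat) = t%:R / (r * s)%N%:R.
  apply/eqP; rewrite eqr_div ?pnatr_eq0 -?lt0n ?muln_gt0 ?P_gt0 ?n1 ?expn_gt0 ?(prime_gt0 pp) ?r0 ?s0 //.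
  by rewrite -!natrM key.
apply: pint_divn; rewrite Euclid_dvdM // negb_or -!prime_coprime //.
by rewrite cr cs.
Qed.

Theorem corollary1 (p N n nu : nat) :
  prime p -> (1 <= N)%N -> (1 <= n)%N -> ~~ (p.-1 %| n)%N ->
  (N = 1%N \/
   (nu + 1 + logn p (\prod_(k < n.+1) (1 + k)`!) + logn p n <= logn p (N - 1))%N) ->
  congr_ppow p nu.+1 (hbern N n / n%:R) (bern n / n%:R).
Proof.
move=> pp N1 n1 hn [->|hM].
  by left; rewrite /hbern /bern /= invr1 mul1r.
have [e eN] : exists e, N = e.+1 by exists N.-1; lia.
subst N; rewrite subn1 /= in hM.
change (\prod_(k < n.+1) (1 + k)`!)%N with (P n) in hM.
have e0 : (0 < e)%N.
  by case: e hM {N1} => // ; rewrite logn0; lia.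
have W := @fin _ _ _ _ pp e0 n1 hn hM.
have Z := Zlem _ _ _ _ pp e0 n1 hM.
have hd : hbern e.+1 n / n%:R - bern n / n%:R =
    p%:R ^+ nu.+1 * (((P n * n`!)%:R * (dd e n - ee n) / e%:R) * (e%:R / (P n * n * p ^ nu.+1)%N%:R)).
  rewrite /hbern /bern -/(dd e n) -/(ee n).
  have hP := P_neq0 n; have he := @e_neq0 e e0.
  have hn0 : (n%:R : rat) != 0 by rewrite pnatr_eq0 -lt0n.
  have hp : (p%:R : rat) != 0 by rewrite pnatr_eq0 -lt0n prime_gt0.
  move: (dd e n) (ee n) hP he hn0 hp.
  move: (P n) (n`!) => Pn f a b hP he hn0 hp.
  rewrite !natrM natrX.
  field; by rewrite hP hn0 expf_neq0.
case: (boolP ((P n * n`!)%:R * (dd e n - ee n) / e%:R * (e%:R / (P n * n * p ^ nu.+1)%N%:R) == 0)) => w0.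
  by left; apply/eqP; rewrite -subr_eq0 hd (eqP w0) mulr0.
right; rewrite hd; apply: ordq_ge => //.
exact: (pintM _ pp).
Qed.
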